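(* Let $h$ be a real analytic function with $h(r)>0$ for $r>0$ and $h^2(r)=r^2\varphi(r)$ with $\varphi$ real analytic and $\varphi(0)=1$. There are no solutions $v$ of $\ddot v=\frac{2}{h^2}(e^v-1)$ on $[0,\infty)$ with $v(0)=\dot v(0)=0$ and $\lim_{r\to\infty}r^{-k}e^{v(r)}=0$ for some $k\in\mathbb{Z}$, such that $\ddot v(0)=b>0$.
   Context: Dots denote derivatives with respect to $r$. *)

(* Defs.v *)
From Stdlib Require Import Reals.
From Coquelicot Require Import Coquelicot.
Open Scope R_scope.

Definition analytic_at (f : R -> R) (x : R) : Prop :=
  exists (a : nat -> R) (d : R), 0 < d /\
    forall y, Rabs (y - x) < d -> is_series (fun n => a n * (y - x) ^ n) (f y).

(* f is real analytic on [0, oo) (at 0 this means f extends analytically). *)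
Definition analytic_on_nonneg (f : R -> R) : Prop :=
  forall x, 0 <= x -> analytic_at f x.

Definition deriv_on_nonneg (f f' : R -> R) : Prop :=
  forall x, 0 <= x ->
    filterlim (fun y => (f y - f x) / (y - x))
      (within (fun y => 0 <= y /\ y <> x) (locally x)) (locally (f' x)).

(* Main.v *)
Require Import Defs.
From Stdlib Require Import Reals Lra ZArith.
From Coquelicot Require Import Coquelicot.
Open Scope R_scope.
Lemma extract (f f' : R -> R) x eps : deriv_on_nonneg f f' -> 0 <= x -> 0 < eps ->
  exists d, 0 < d /\ forall y, 0 <= y -> y <> x -> Rabs (y - x) < d ->
   Rabs ((f y - f x)/(y - x) - f' x) < eps.
Proof.
intros H hx he.
destruct (H x hx (ball (f' x) eps) (locally_ball (f' x) (mkposreal eps he))) as [d Hd].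
exists d. split. apply cond_pos. intros y h1 h2 h3. apply (Hd y h3). split; auto.
Qed.
Lemma dpl (f f' : R -> R) x : deriv_on_nonneg f f' -> 0 < x -> derivable_pt_lim f x (f' x).
Proof.
intros H hx e he.
destruct (extract f f' x e H (Rlt_le _ _ hx) he) as [d [hd Hd]].
exists (mkposreal (Rmin d x) (Rmin_pos _ _ hd hx)). simpl. intros h hh0 hh.
assert (A := Rmin_l d x). assert (B := Rmin_r d x).
specialize (Hd (x + h)).
replace (x + h - x) with h in Hd by ring. apply Hd; auto.
- apply Rabs_def2 in hh. lra.
- intro E; apply hh0; lra.
- lra.
Qed.
Lemma keyP (h v v1 v2 : R -> R)
  (D1 : forall x, 0 < x -> derivable_pt_lim v x (v1 x))
  (D2 : forall x, 0 < x -> derivable_pt_lim v1 x (v2 x))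
  (Hh_pos : forall r, 0 < r -> 0 < h r)
  (ODE : forall r, 0 < r -> v2 r = 2 / (h r) ^ 2 * (exp (v r) - 1))
  t0 r : 0 < t0 -> t0 < r -> (forall s, t0 <= s < r -> 0 < v s) ->
  v r >= v t0 + v1 t0 * (r - t0).
Proof.
intros ht hr Hs.
destruct (MVT_cor2 v v1 t0 r hr) as [xi [E1 [X1 X2]]].
{ intros c hc; apply D1; lra. }
destruct (MVT_cor2 v1 v2 t0 xi X1) as [ze [E2 [Z1 Z2]]].
{ intros c hc; apply D2; lra. }
assert (P : 0 < v2 ze).
{ rewrite ODE by lra. assert (hz := Hh_pos ze ltac:(lra)).
  assert (vz := Hs ze ltac:(lra)). assert (ee := exp_ineq1_le (v ze)).
  apply Rmult_lt_0_compat; [|lra]. apply Rdiv_lt_0_compat; [lra|]. apply pow_lt; lra. }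
assert (v1 xi > v1 t0) by nra. nra.
Qed.
Lemma cont_of (f : R -> R) x l : derivable_pt_lim f x l -> forall e, 0 < e -> exists d, 0 < d /\ forall y, Rabs (y - x) < d -> Rabs (f y - f x) < e.
Proof.
intros H e He.
assert (C : continuity_pt f x) by (apply derivable_continuous_pt; exists l; exact H).
destruct (C e He) as [d [Hd Hy]]. exists d; split; auto.
intros y Hyx. destruct (Req_dec y x) as [->|Hne].
- rewrite Rminus_diag, Rabs_R0; auto.
- apply (Hy y). split. split; [exact I | auto]. exact Hyx.
Qed.
Lemma keyPos (h v v1 v2 : R -> R)
  (D1 : forall x, 0 < x -> derivable_pt_lim v x (v1 x))
  (D2 : forall x, 0 < x -> derivable_pt_lim v1 x (v2 x))
  (Hh_pos : forall r, 0 < r -> 0 < h r)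
  (ODE : forall r, 0 < r -> v2 r = 2 / (h r) ^ 2 * (exp (v r) - 1))
  t0 : 0 < t0 -> 0 < v t0 -> 0 <= v1 t0 -> forall r, t0 <= r -> 0 < v r.
Proof.
intros ht hv hv1 r hr.
destruct (Rlt_or_le 0 (v r)) as [ok|bad]; auto. exfalso.
set (E := fun x => t0 <= x <= r /\ forall s, t0 <= s <= x -> 0 < v s).
destruct (completeness E) as [m [Hub Hleast]].
{ exists r. intros x [[_ Hx] _]; exact Hx. }
{ exists t0. split; [lra|]. intros s hs. replace s with t0 by lra. exact hv. }
assert (Et0 : E t0). { split; [lra|]. intros s hs. replace s with t0 by lra. exact hv. }
assert (M1 := Hub t0 Et0).
assert (M2 : m <= r). { apply Hleast. intros x [[_ Hx] _]; exact Hx. }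
assert (F1 : forall s, t0 <= s < m -> 0 < v s).
{ intros s hs. destruct (Rlt_or_le 0 (v s)) as [o|b]; auto. exfalso.
  assert (m <= s). { apply Hleast. intros x [Hx1 Hx2].
    destruct (Rle_or_lt x s); auto. exfalso. specialize (Hx2 s ltac:(lra)). lra. }
  lra. }
assert (F2 : 0 < v m).
{ destruct (Req_dec m t0) as [e|ne]. { rewrite e; exact hv. }
  assert (K := keyP h v v1 v2 D1 D2 Hh_pos ODE t0 m ht ltac:(lra) F1). nra. }
assert (mr : m < r). { destruct (Req_dec m r) as [e|ne]; [rewrite e in F2; lra | lra]. }
destruct (cont_of v m (v1 m) (D1 m ltac:(lra)) (v m) F2) as [d [hd Hd]].
set (x := Rmin (m + d/2) r).
assert (X1 := Rmin_l (m + d/2) r). assert (X2 := Rmin_r (m + d/2) r). fold x in X1, X2.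
assert (xm : m < x). { unfold x. apply Rmin_glb_lt; lra. }
assert (Ex : E x).
{ split; [lra|]. intros s hs. destruct (Rlt_or_le s m) as [l|g]. apply F1; lra.
  assert (Q : Rabs (s - m) < d) by (rewrite Rabs_pos_eq; lra).
  specialize (Hd s Q). apply Rabs_def2 in Hd. lra. }
assert (H' := Hub x Ex). lra.
Qed.
Lemma exp_INR n y : exp (INR n * y) = exp y ^ n.
Proof. induction n. simpl. rewrite Rmult_0_l, exp_0. reflexivity.
rewrite S_INR, Rmult_plus_distr_r, Rmult_1_l, exp_plus, IHn. simpl. ring. Qed.
Lemma exp_le (a b : R) : a <= b -> exp a <= exp b.
Proof. intro H. destruct (Rle_lt_or_eq_dec _ _ H) as [l|e]. apply Rlt_le, exp_increasing; auto. rewrite e; lra. Qed.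

Theorem mainTheorem14 (h phi : R -> R)
  (Hh_an : analytic_on_nonneg h)
  (Hphi_an : analytic_on_nonneg phi)
  (Hh_pos : forall r, 0 < r -> 0 < h r)
  (Hh_phi : forall r, 0 <= r -> (h r) ^ 2 = r ^ 2 * phi r)
  (Hphi0 : phi 0 = 1)
  (b : R) (Hb : 0 < b) :
  ~ exists (v v1 v2 : R -> R),
      deriv_on_nonneg v v1 /\ deriv_on_nonneg v1 v2 /\
      (forall r, 0 < r -> v2 r = 2 / (h r) ^ 2 * (exp (v r) - 1)) /\
      v 0 = 0 /\ v1 0 = 0 /\
      (exists k : Z, is_lim (fun r => powerRZ r (- k) * exp (v r)) p_infty 0) /\
      v2 0 = b.
Proof.
intros [v [v1 [v2 [Hv [Hv1 [ODE [v0 [v10 [[k Hlim] v20]]]]]]]]].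
assert (D1 : forall x, 0 < x -> derivable_pt_lim v x (v1 x)) by (intros; apply dpl; auto).
assert (D2 : forall x, 0 < x -> derivable_pt_lim v1 x (v2 x)) by (intros; apply dpl; auto).
destruct (extract v1 v2 0 (b/2) Hv1 (Rle_refl 0) ltac:(lra)) as [d1 [hd1 Hd1]].
assert (P1 : forall y, 0 < y < d1 -> 0 < v1 y).
{ intros y hy. specialize (Hd1 y ltac:(lra) ltac:(lra) ltac:(rewrite Rminus_0_r, Rabs_pos_eq; lra)).
  rewrite v10, v20, !Rminus_0_r in Hd1. apply Rabs_def2 in Hd1.
  assert (0 < v1 y / y) by lra.
  replace (v1 y) with (v1 y / y * y) by (field; lra). nra. }
destruct (extract v v1 0 1 Hv (Rle_refl 0) ltac:(lra)) as [d0 [hd0 Hd0]].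
assert (P0 : forall y, 0 < y < d0 -> - y < v y).
{ intros y hy. specialize (Hd0 y ltac:(lra) ltac:(lra) ltac:(rewrite Rminus_0_r, Rabs_pos_eq; lra)).
  rewrite v0, v10, !Rminus_0_r in Hd0. apply Rabs_def2 in Hd0.
  replace (v y) with (v y / y * y) by (field; lra). nra. }
assert (Mono : forall s t, 0 < s -> s < t -> t < d1 -> v s < v t).
{ intros s t hs hst ht. destruct (MVT_cor2 v v1 s t hst) as [xi [E [X1 X2]]].
  { intros c hc; apply D1; lra. }
  assert (0 < v1 xi) by (apply P1; lra). nra. }
set (t0 := d1/2). set (t1 := d1/4).
assert (vt1 : 0 <= v t1).
{ destruct (Rle_or_lt 0 (v t1)) as [o|bad]; auto. exfalso.
  set (s := Rmin (Rmin (t1/2) (d0/2)) (- v t1 / 2)).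
  assert (S1 := Rmin_l (Rmin (t1/2) (d0/2)) (- v t1 / 2)).
  assert (S2 := Rmin_r (Rmin (t1/2) (d0/2)) (- v t1 / 2)).
  assert (S3 := Rmin_l (t1/2) (d0/2)). assert (S4 := Rmin_r (t1/2) (d0/2)).
  fold s in S1, S2.
  assert (t1p : 0 < t1) by (unfold t1; lra).
  assert (spos : 0 < s). { unfold s. apply Rmin_pos; [apply Rmin_pos|]; lra. }
  assert (A := Mono s t1 spos ltac:(lra) ltac:(unfold t1; lra)).
  assert (B := P0 s ltac:(lra)). lra. }
assert (vt0 : 0 < v t0). { assert (X := Mono t1 t0 ltac:(unfold t1; lra) ltac:(unfold t0, t1; lra) ltac:(unfold t0; lra)). lra. }
assert (c0 : 0 < v1 t0) by (apply P1; unfold t0; lra).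
assert (ht0 : 0 < t0) by (unfold t0; lra).
assert (Pos := keyPos h v v1 v2 D1 D2 Hh_pos ODE t0 ht0 vt0 (Rlt_le _ _ c0)).
assert (Lin : forall r, t0 < r -> v r >= v1 t0 * (r - t0)).
{ intros r hr. assert (K := keyP h v v1 v2 D1 D2 Hh_pos ODE t0 r ht0 hr ltac:(intros s hs; apply Pos; lra)). lra. }
destruct (Hlim (ball 0 (mkposreal 1 Rlt_0_1)) (locally_ball _ _)) as [M HM].
set (c := v1 t0) in *.
destruct (- k)%Z as [|p|p] eqn:Ek.
- set (r := Rabs M + t0 + 1).
  assert (Mr : M < r) by (unfold r; assert (Rle M (Rabs M)) by apply RRle_abs; lra).
  specialize (HM r Mr). change (Rabs (powerRZ r 0 * exp (v r) - 0) < 1) in HM.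
  simpl in HM. assert (vr := Pos r ltac:(unfold r; assert (0 <= Rabs M) by apply Rabs_pos; lra)).
  assert (ee := exp_ineq1_le (v r)). rewrite Rmult_1_l, Rminus_0_r, Rabs_pos_eq in HM; lra.
- set (r := Rabs M + t0 + 1).
  assert (0 <= Rabs M) by apply Rabs_pos.
  assert (Mr : M < r) by (unfold r; assert (Rle M (Rabs M)) by apply RRle_abs; lra).
  specialize (HM r Mr). change (Rabs (powerRZ r (Z.pos p) * exp (v r) - 0) < 1) in HM.
  simpl in HM. assert (vr := Pos r ltac:(unfold r; lra)).
  assert (ee := exp_ineq1_le (v r)).
  assert (pp := pow_R1_Rle r (Pos.to_nat p) ltac:(unfold r; lra)).
  rewrite Rminus_0_r, Rabs_pos_eq in HM by nra. nra.
- set (n := Pos.to_nat p).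
  assert (npos : (0 < n)%nat) by apply Pos2Nat.is_pos.
  assert (nR : 0 < INR n) by (apply lt_0_INR; exact npos).
  set (q := 16 * INR n ^ 2 / c ^ 2).
  assert (qe : q * c ^ 2 = 16 * INR n ^ 2) by (unfold q; field; lra).
  assert (q0 : 0 <= q) by (unfold q; apply Rle_mult_inv_pos; nra).
  set (r := Rabs M + 2 * t0 + q + 1).
  assert (0 <= Rabs M) by apply Rabs_pos.
  assert (Mr : M < r) by (unfold r; assert (Rle M (Rabs M)) by apply RRle_abs; lra).
  specialize (HM r Mr). change (Rabs (powerRZ r (Z.neg p) * exp (v r) - 0) < 1) in HM.
  simpl in HM. fold n in HM.
  assert (r1 : 1 <= r) by (unfold r; lra).
  set (y := c * r / (2 * INR n)).
  assert (y0 : 0 <= y) by (unfold y; apply Rle_mult_inv_pos; nra).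
  assert (ey : r <= exp y).
  { replace (exp y) with (exp (y/2) * exp (y/2)) by (rewrite <- exp_plus; f_equal; field).
    assert (ee := exp_ineq1_le (y/2)).
    assert (yy : y * y / 4 >= r).
    { unfold y. assert (c ^ 2 * r >= 16 * INR n ^ 2) by (unfold r; nra).
      replace (c * r / (2 * INR n) * (c * r / (2 * INR n)) / 4) with ((c^2 * r) * r / (16 * INR n ^ 2)) by (field; lra).
      apply Rle_ge. apply Rmult_le_reg_r with (16 * INR n ^ 2). nra.
      replace (c ^ 2 * r * r / (16 * INR n ^ 2) * (16 * INR n ^ 2)) with (c^2 * r * r) by (field; lra). nra. }
    nra. }
  assert (rn : r ^ n <= exp (v r)).
  { apply Rle_trans with (exp y ^ n). apply pow_incr; lra.
    rewrite <- exp_INR. apply exp_le.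
    replace (INR n * y) with (c * r / 2) by (unfold y; field; lra).
    assert (L := Lin r ltac:(unfold r; lra)). assert (r2 : r - t0 >= r / 2) by (unfold r; lra). assert (0 <= c * (r - t0 - r / 2)) by (apply Rmult_le_pos; lra). lra. }
  assert (rp : 0 < r ^ n) by (apply pow_lt; lra).
  assert (1 <= / r ^ n * exp (v r)).
  { apply Rmult_le_reg_l with (r ^ n); auto. rewrite <- Rmult_assoc, Rinv_r by lra. lra. }
  rewrite Rminus_0_r, Rabs_pos_eq in HM by lra. lra.
Qed.
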